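(* Let $X$ be a Banach space and let $A$ be a separable closed convex bounded subset of $X$ having small combinations of slices. Then $A$ is an SCD set.
   Context: A slice of a convex bounded set $A$ is $S(A,x^*,\varepsilon)=\{x\in A:\ \mathrm{Re}\,x^*(x)>\sup\mathrm{Re}\,x^*(A)-\varepsilon\}$ ($x^*\in X^*$, $\varepsilon>0$). A convex combination of slices of $A$ is a set $\sum_{i=1}^m\lambda_iS_i$ with $\lambda_i>0$, $\sum\lambda_i=1$, $S_i$ slices of $A$. $A$ has small combinations of slices if every slice of $A$ contains convex combinations of slices of $A$ of arbitrarily small diameter. $A$ is an SCD set if there is a sequence $(S_n)$ of slices of $A$ such that $A\subseteq\overline{\mathrm{conv}}(B)$ for every $B\subseteq A$ intersecting every $S_n$. *)

(* Defs.v *)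
From HB Require Import structures.
From mathcomp Require Import all_boot all_order all_algebra.
From mathcomp Require Import all_classical all_reals all_analysis.
Set Implicit Arguments. Unset Strict Implicit. Unset Printing Implicit Defensive.
Import Order.TTheory GRing.Theory Num.Theory.
Import numFieldNormedType.Exports.
Local Open Scope classical_set_scope.
Local Open Scope ring_scope.

Section Defs.
Context {R : realType} {X : normedModType R}.

Definition is_dual (f : X -> R) : Prop :=
  (forall (a : R) (x y : X), f (a *: x + y) = a * f x + f y) /\ continuous f.

Definition separable_set (A : set X) : Prop :=
  exists D : set X, [/\ D `<=` A, countable D & A `<=` closure D].

Definition slice (A : set X) (f : X -> R) (e : R) : set X :=
  [set x | A x /\ sup (f @` A) - e < f x].

Definition diam (S : set X) : R :=
  sup [set `|x - y| | x in S & y in S].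

Definition comb_slices (A : set X) (m : nat) (lam : 'I_m -> R)
    (fs : 'I_m -> X -> R) (es : 'I_m -> R) : set X :=
  [set z | exists xs : 'I_m -> X,
     (forall i, slice A (fs i) (es i) (xs i)) /\ z = \sum_(i < m) lam i *: xs i].

Definition is_conv_comb_slices (A : set X) (C : set X) : Prop :=
  exists (m : nat) (lam : 'I_m -> R) (fs : 'I_m -> X -> R) (es : 'I_m -> R),
    [/\ (forall i, 0 < lam i), \sum_(i < m) lam i = 1,
        (forall i, is_dual (fs i) /\ 0 < es i) & C = comb_slices A lam fs es].

Definition small_combinations_of_slices (A : set X) : Prop :=
  forall (f : X -> R) (e : R), is_dual f -> 0 < e ->
  forall eps : R, 0 < eps ->
    exists C : set X, [/\ is_conv_comb_slices A C, C `<=` slice A f e & diam C < eps].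

Definition conv_hull (B : set X) : set X :=
  [set z | exists (m : nat) (lam : 'I_m -> R) (xs : 'I_m -> X),
     [/\ (forall i, 0 <= lam i), \sum_(i < m) lam i = 1, (forall i, B (xs i))
       & z = \sum_(i < m) lam i *: xs i]].

Definition SCD_set (A : set X) : Prop :=
  exists (fs : nat -> X -> R) (es : nat -> R),
    (forall n, is_dual (fs n) /\ 0 < es n) /\
    forall B : set X, B `<=` A ->
      (forall n, B `&` slice A (fs n) (es n) !=set0) ->
      A `<=` closure (conv_hull B).

End Defs.

(* Main.v *)
From HB Require Import structures.
Require Import Defs.
From mathcomp Require Import all_boot all_order all_algebra.
From mathcomp Require Import all_classical all_reals all_analysis.
From mathcomp Require Import ring lra.
Set Implicit Arguments. Unset Strict Implicit. Unset Printing Implicit Defensive.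
Import Order.TTheory GRing.Theory Num.Theory.
Import numFieldNormedType.Exports.
Local Open Scope classical_set_scope.
Local Open Scope ring_scope.
Section HahnBanach.
Variables (R : realType) (X : lmodType R) (q : X -> R).
Hypothesis qadd : forall x y, q (x + y) <= q x + q y.
Hypothesis qhom : forall t x, 0 < t -> q (t *: x) = t * q x.
Hypothesis qge0 : forall x, 0 <= q x.

Definition lingraph (G : set (X * R)) :=
  [/\ forall x r s, G (x, r) -> G (x, s) -> r = s,
      forall a x y r s, G (x, r) -> G (y, s) -> G (a *: x + y, a * r + s)
    & forall x r, G (x, r) -> r <= q x].

Lemma lingraph0 G x r : lingraph G -> G (x, r) -> G (0, 0).
Proof.
case=> _ Gl _ Gx.
have := Gl (-1) x x r r Gx Gx.
by rewrite scaleN1r addNr mulN1r addNr.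
Qed.

Lemma lingraphZ G x r t : lingraph G -> G (x, r) -> G (t *: x, t * r).
Proof.
move=> LG Gx; have G0 := lingraph0 LG Gx.
case: LG => _ Gl _.
by have := Gl t x 0 r 0 Gx G0; rewrite addr0 addr0.
Qed.

Lemma lingraphD G x y r s : lingraph G -> G (x, r) -> G (y, s) -> G (x + y, r + s).
Proof.
case=> _ Gl _ Gx Gy.
by have := Gl 1 x y r s Gx Gy; rewrite scale1r mul1r.
Qed.

Lemma extend_step G x1 : lingraph G -> G (0, 0) -> ~ (exists r, G (x1, r)) ->
  exists G', lingraph G' /\ G `<` G'.
Proof.
move=> LG G00 nx1.
pose S := [set v | exists m r, G (m, r) /\ v = r - q (m - x1)].
have bnd : forall m1 r1 m2 r2, G (m1, r1) -> G (m2, r2) ->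
    r1 - q (m1 - x1) <= q (m2 + x1) - r2.
  move=> m1 r1 m2 r2 G1 G2.
  have G12 := lingraphD LG G1 G2.
  case: LG => _ _ Gq.
  have := Gq _ _ G12.
  have : q (m1 + m2) <= q (m1 - x1) + q (m2 + x1).
    by have := qadd (m1 - x1) (m2 + x1); rewrite addrACA addNr addr0.
  move=> h1 h2; have := le_trans h2 h1; lra.
pose c := sup S.
have S0 : S !=set0 by exists (0 - q (0 - x1)); exists 0, 0.
have Sub : has_ubound S.
  exists (q (0 + x1) - 0) => v [m [r [Gm ->]]]; exact: bnd.
have cle : forall m r, G (m, r) -> c <= q (m + x1) - r.
  move=> m r Gm; apply: ge_sup => // v [m' [r' [Gm' ->]]]; exact: bnd.
have cge : forall m r, G (m, r) -> r - q (m - x1) <= c.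
  move=> m r Gm; apply: ub_le_sup => //; by exists m, r.
clearbody c.
pose G' := [set p : X * R | exists m r t, G (m, r) /\ p = (m + t *: x1, r + t * c)].
exists G'; split.
  split.
  - move=> x r s [m [r0 [t [Gm [-> ->]]]]] [m' [r0' [t' [Gm' []]]]].
    move=> Ex ->.
    have [ett'|ntt'] := eqVneq t t'.
      subst t'; have Em : m = m' by apply: (addIr (t *: x1)); exact: Ex.
      subst m'.
      by case: LG => Gf _ _; rewrite (Gf _ _ _ Gm Gm').
    exfalso; apply: nx1.
    have : (t' - t) *: x1 = m - m'.
      by rewrite (canRL (addrK (t *: x1)) Ex) scalerBl addrAC (addrC m') addrK.
    move=> E2; exists ((t' - t)^-1 * (r0 + - r0')).
    have nz : t' - t != 0 by rewrite subr_eq0 eq_sym.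
    have -> : x1 = (t' - t)^-1 *: (m - m').
      by rewrite -E2 scalerA mulVf // scale1r.
    apply: lingraphZ => //; apply: lingraphD => //.
    have := lingraphZ (-1) LG Gm'.
    by rewrite scaleN1r mulN1r.
  - move=> a x y r s [m [r0 [t [Gm [-> ->]]]]] [m' [r0' [t' [Gm' [-> ->]]]]].
    exists (a *: m + m'), (a * r0 + r0'), (a * t + t'); split.
      by case: LG => _ Gl _; apply: Gl.
    congr pair.
      by rewrite scalerDr scalerA scalerDl; rewrite !addrA; congr (_ + _);
        rewrite -!addrA; congr (_ + _); rewrite addrC.
    by rewrite mulrDr mulrA mulrDl !addrA; congr (_ + _);
      rewrite -!addrA; congr (_ + _); rewrite addrC.
  - move=> x r [m [r0 [t [Gm [-> ->]]]]].
    case: (LG) => _ _ Gq.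
    have [tneg|tpos|t0] := ltgtP t 0.
    + have sp : 0 < - t by rewrite oppr_gt0.
      have Gm' := lingraphZ (- t)^-1 LG Gm.
      have h := cge _ _ Gm'.
      have e : m + t *: x1 = (- t) *: ((- t)^-1 *: m - x1).
        by rewrite scalerBr scalerA mulfV ?gt_eqF // scale1r scaleNr opprK.
      rewrite e qhom //.
      have ht : (- t) * (- t)^-1 = 1 by rewrite mulfV ?gt_eqF.
      have {}h : (- t)^-1 * r0 - q ((- t)^-1 *: m - x1) <= c := h.
      move: h ht sp; generalize (q ((- t)^-1 *: m - x1)) => Q; generalize ((- t)^-1) => ti.
      move=> h ht sp.
      have H2 : 0 <= (- t) * (c - (ti * r0 - Q)) by apply: mulr_ge0; lra.
      rewrite !mulrBr mulrA ht mul1r in H2.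
      lra.
    + have Gm' := lingraphZ t^-1 LG Gm.
      have h := cle _ _ Gm'.
      have e : m + t *: x1 = t *: (t^-1 *: m + x1).
        by rewrite scalerDr scalerA mulfV ?gt_eqF // scale1r.
      rewrite e qhom //.
      have ht : t * t^-1 = 1 by rewrite mulfV ?gt_eqF.
      have {}h : c <= q (t^-1 *: m + x1) - t^-1 * r0 := h.
      move: h ht tpos; generalize (q (t^-1 *: m + x1)) => Q; generalize (t^-1) => ti.
      move=> h ht sp.
      have H2 : 0 <= t * (Q - ti * r0 - c) by apply: mulr_ge0; lra.
      rewrite !mulrBr mulrA ht mul1r in H2.
      lra.
    + by subst t; rewrite scale0r mul0r !addr0; exact: Gq.
split.
  move=> [m r] Gm; exists m, r, 0; split => //.
  by rewrite scale0r mul0r !addr0.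
move=> GG; apply: nx1; exists (0 + 1 * c); apply: GG.
by exists 0, 0, 1; split => //; rewrite !add0r scale1r.
Qed.


Lemma q0 : q 0 = 0.
Proof.
have := qhom 0 (ltr0n _ 2); rewrite scaler0 => h.
by apply/eqP; rewrite -(subr_eq0); apply/eqP; lra.
Qed.

Lemma hahn_banach x0 : exists f : X -> R,
  [/\ forall a x y, f (a *: x + y) = a * f x + f y,
      forall x, f x <= q x & f x0 = q x0].
Proof.
pose G0 := [set p : X * R | exists s, p = (s *: x0, s * q x0)].
have LG0 : lingraph G0.
  split.
  - move=> x r s [s1 [-> ->]] [s2 []] e ->.
    have [x00|nx0] := eqVneq x0 0.
      by rewrite x00 q0 !mulr0.
    have : (s1 - s2) *: x0 = 0 by rewrite scalerBl e subrr.
    move/eqP; rewrite scaler_eq0 (negbTE nx0) orbF subr_eq0 => /eqP -> //.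
  - move=> a x y r s [s1 [-> ->]] [s2 [-> ->]].
    exists (a * s1 + s2); congr pair.
      by rewrite scalerDl scalerA.
    by rewrite mulrDl mulrA.
  - move=> x r [s [-> ->]].
    have [sp|] := ltP 0 s; first by rewrite qhom.
    move=> sle; have := qge0 x0; have := qge0 (s *: x0); nra.
pose P := [set G : set (X * R) | lingraph G /\ (G = set0 \/ G0 `<=` G)].
have [A [[LA A0] Amax]] : exists A, P A /\ (forall B, A `<` B -> ~ P B).
  apply: Zorn_bigcup => F FP Ftot.
  have two : forall p1 p2, (\bigcup_(G in F) G) p1 -> (\bigcup_(G in F) G) p2 ->
      exists G, [/\ F G, G p1 & G p2].
    move=> p1 p2 [G1 FG1 G1p] [G2 FG2 G2p].
    case: (Ftot _ _ FG1 FG2) => sub.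
      by exists G2; split => //; apply: sub.
    by exists G1; split => //; apply: sub.
  split.
    split.
    - move=> x r s h1 h2; have [G [FG Gr Gs]] := two _ _ h1 h2.
      by case: (FP _ FG) => [[Gf _ _] _]; exact: Gf _ _ _ Gr Gs.
    - move=> a x y r s h1 h2; have [G [FG Gr Gs]] := two _ _ h1 h2.
      exists G => //.
      by case: (FP _ FG) => [[_ Gl _] _]; exact: Gl.
    - move=> x r [G FG Gx].
      by case: (FP _ FG) => [[_ _ Gq] _]; exact: Gq.
  have [[G [FG G0G]]|nG] := pselect (exists G, F G /\ G0 `<=` G).
    by right; apply: subset_trans G0G _; exact: bigcup_sup.
  left; apply/seteqP; split => // p [G FG Gp].
  case: (FP _ FG) => _ [G0e|G0G]; first by rewrite G0e in Gp.
  by exfalso; apply: nG; exists G.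
have G00 : G0 (0, 0) by exists 0; rewrite scale0r mul0r.
have {A0} G0A : G0 `<=` A.
  case: A0 => // A0; exfalso; apply: (Amax G0).
    split; first by rewrite A0.
    by move=> /(_ _ G00); rewrite A0.
  by split => //; right.
have A00 : A (0, 0) by apply: G0A.
have Atot : forall x, exists r, A (x, r).
  move=> x; apply: contrapT => nx.
  have [G' [LG' [AG' nG'A]]] := extend_step LA A00 nx.
  apply: (Amax G'); first by split.
  split => //; right; exact: subset_trans G0A AG'.
pose f x := xget (0:R) [set r | A (x, r)].
have Af : forall x, A (x, f x).
  move=> x; exact: (xgetPex (0:R) (Atot x)).
case: LA => Af1 Al Aq.
exists f; split.
- by move=> a x y; exact: Af1 (Af _) (Al _ _ _ _ _ (Af x) (Af y)).
- by move=> x; apply: Aq.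
- have h : A (x0, q x0) by apply: G0A; exists 1; rewrite scale1r mul1r.
  exact: Af1 (Af _) h.
Qed.

End HahnBanach.
Section T.
Variables (R : realType) (X : normedModType R).
Lemma cont_of_bound (f : X -> R) : (forall a x y, f (a *: x + y) = a * f x + f y) ->
  (forall x, `|f x| <= `|x|) -> continuous f.
Proof.
move=> fl fb x; apply/cvgrPdist_lt => e e0.
apply/nbhs_ballP; exists e => // y /=; rewrite -ball_normE /ball_ /= => hy.
have : f x - f y = f (x - y).
  have := fl (-1) y x; rewrite scaleN1r mulN1r addrC => ->; by rewrite addrC.
move=> ->; exact: le_lt_trans (fb _) hy.
Qed.

Lemma bound_of_dual (f : X -> R) : is_dual f -> exists2 k, 0 < k & forall x, `|f x| <= k * `|x|.
Proof.
move=> [fl fc].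
have f0 : f 0 = 0.
  have := fl 1 0 0; rewrite scaler0 addr0 mul1r => h; lra.
have := fc 0; move/cvgrPdist_lt => /(_ 1 ltr01) /nbhs_ballP [e e0 he].
exists (2 / e); first by rewrite divr_gt0.
move=> x; have [->|nx] := eqVneq x 0; first by rewrite f0 !normr0 mulr0.
have nxp : 0 < `|x| by rewrite normr_gt0.
pose c := e / 2 / `|x|.
have cp : 0 < c by rewrite /c !divr_gt0.
have : ball (0:X) e (c *: x).
  rewrite -ball_normE /ball_ /= sub0r normrN normrZ gtr0_norm // /c.
  rewrite divfK ?gt_eqF // ltr_pdivrMr // ltr_pMr //; exact: ltr1n.
move=> /he /=; rewrite f0 sub0r normrN.
have -> : f (c *: x) = c * f x by rewrite -[c *: x]addr0 fl f0 addr0.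
rewrite normrM gtr0_norm // => h.
have : `|f x| < c^-1 by rewrite -(ltr_pM2l cp) mulfV ?gt_eqF.
have -> : c^-1 = 2 / e * `|x| by rewrite /c invf_div invf_div mulrC.
by move/ltW.
Qed.
End T.
Section Conv.
Variables (R : realType) (X : normedModType R).

Lemma conv_hull1 (B : set X) b : B b -> conv_hull B b.
Proof.
move=> Bb; exists 1%N, (fun _ => 1), (fun _ => b); split.
- by move=> _; exact: ler01.
- by rewrite big_ord1.
- by [].
- by rewrite big_ord1 scale1r.
Qed.

Lemma conv_hull2 (B : set X) w1 w2 a b : conv_hull B w1 -> conv_hull B w2 ->
  0 <= a -> 0 <= b -> a + b = 1 -> conv_hull B (a *: w1 + b *: w2).
Proof.
move=> [m [l1 [x1 [l1p l1s x1B ->]]]] [n [l2 [x2 [l2p l2s x2B ->]]]] a0 b0 ab.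
pose lam (k : 'I_(m + n)) := match fintype.split k with inl i => a * l1 i | inr j => b * l2 j end.
pose xs (k : 'I_(m + n)) := match fintype.split k with inl i => x1 i | inr j => x2 j end.
have sl : forall i : 'I_m, fintype.split (lshift n i) = inl i by move=> i; exact: (@unsplitK m n (inl i)).
have sr : forall j : 'I_n, fintype.split (rshift m j) = inr j by move=> j; exact: (@unsplitK m n (inr j)).
exists (m + n), lam, xs; split.
- by move=> k; rewrite /lam; case: (fintype.split k) => i; apply: mulr_ge0.
- rewrite big_split_ord /lam.
  rewrite (eq_bigr (fun i => a * l1 i)); last by move=> i _; cbv beta; rewrite sl.
  rewrite (eq_bigr (fun j => b * l2 j)); last by move=> j _; cbv beta; rewrite sr.
  by rewrite -!mulr_sumr l1s l2s !mulr1.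
- by move=> k; rewrite /xs; case: (fintype.split k).
- rewrite big_split_ord; congr (_ + _); rewrite scaler_sumr; apply: eq_bigr.
    by move=> i _; cbv beta; rewrite /lam /xs sl scalerA.
  by move=> j _; cbv beta; rewrite /lam /xs sr scalerA.
Qed.
End Conv.
Ltac pg := match goal with |- ?g => idtac "GOAL:" g end.
Section Id.
Variables (R : realType) (X : lmodType R).
Lemma vec_id1 (t1 t2 T a1 a2 : R) (z u1 u2 w1 w2 : X) :
  T * a1 = t1 -> T * a2 = t2 -> T = t1 + t2 ->
  t1 *: (z + u1 - w1) + t2 *: (z + u2 - w2) =
  T *: (z + (a1 *: u1 + a2 *: u2) - (a1 *: w1 + a2 *: w2)).
Proof.
move=> h1 h2 hT.
rewrite !scalerBr !scalerDr !scalerA h1 h2 {1}hT scalerDl.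
rewrite opprD !addrA.
set a := t1 *: z; set b := t1 *: u1; set c := t1 *: w1; set d := t2 *: z.
by rewrite (addrAC (a + b) (- c) d) (addrAC (a + b + d) (- c) _) (addrAC a b d).
Qed.

Lemma vec_id2 (t c : R) (b0 z u w : X) : (1 + t) * c = 1 ->
  b0 - z - t *: (z + u - w) = (1 + t) *: ((c *: b0 + (t * c) *: w) - z) - t *: u.
Proof.
move=> hc.
rewrite !scalerBr !scalerDr !scalerA hc scale1r mulrCA hc mulr1 scalerDl scale1r.
rewrite ?opprD !addrA opprK.
rewrite (addrAC (b0 - z - t *: z) (- (t *: u)) (t *: w)).
rewrite (addrAC (b0 - z) (- (t *: z)) (t *: w)).
by rewrite (addrAC b0 (- z) (t *: w)).
Qed.
End Id.
Section Sep.
Variables (R : realType) (X : normedModType R).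

Lemma lin_facts (f : X -> R) : (forall a x y, f (a *: x + y) = a * f x + f y) ->
  [/\ f 0 = 0, forall x y, f (x + y) = f x + f y, forall x, f (- x) = - f x
    & forall a x, f (a *: x) = a * f x].
Proof.
move=> fl.
have f0 : f 0 = 0 by have := fl 1 0 0; rewrite scaler0 addr0 mul1r => h; lra.
have fD : forall x y, f (x + y) = f x + f y.
  by move=> x y; have := fl 1 x y; rewrite scale1r mul1r.
have fZ : forall a x, f (a *: x) = a * f x.
  by move=> a x; have := fl a x 0; rewrite addr0 f0 addr0.
split => // x; by rewrite -scaleN1r fZ mulN1r.
Qed.

Lemma separation (B : set X) (z b0 : X) (d : R) : 0 < d -> B b0 ->
  (forall w, conv_hull B w -> d <= `|z - w|) ->
  exists f : X -> R, [/\ (forall a x y, f (a *: x + y) = a * f x + f y),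
     (forall x, `|f x| <= `|x|) &
     exists2 delta, 0 < delta & forall b, B b -> f z + delta <= f b].
Proof.
move=> d0 Bb0 hd.
pose NE := [set y : X | exists t u w, [/\ 0 <= t, `|u| <= d / 2, conv_hull B w &
   y = t *: (z + u - w)]].
have d2 : 0 < d / 2 by rewrite divr_gt0.
have NE0 : NE 0.
  exists 0, 0, b0; split.
  - by [].
  - by rewrite normr0 ltW.
  - exact: conv_hull1.
  - by rewrite scale0r.
have NEZ : forall s y, 0 <= s -> NE y -> NE (s *: y).
  move=> s y s0 [t [u [w [t0 hu hw ->]]]]; exists (s * t), u, w; split => //.
    exact: mulr_ge0.
  by rewrite scalerA.
have NED : forall y1 y2, NE y1 -> NE y2 -> NE (y1 + y2).
  move=> _ _ [t1 [u1 [w1 [t10 hu1 hw1 ->]]]] [t2 [u2 [w2 [t20 hu2 hw2 ->]]]].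
  have [T0|Tn] := eqVneq (t1 + t2) 0.
    have e1 : t1 = 0 by lra.
    have e2 : t2 = 0 by lra.
    by rewrite e1 e2 !scale0r addr0.
  have Tp : 0 < t1 + t2 by rewrite lt_def Tn addr_ge0.
  pose a1 := t1 / (t1 + t2); pose a2 := t2 / (t1 + t2).
  have a10 : 0 <= a1 by rewrite /a1 divr_ge0 // ltW.
  have a20 : 0 <= a2 by rewrite /a2 divr_ge0 // ltW.
  have a12 : a1 + a2 = 1 by rewrite /a1 /a2 -mulrDl mulfV.
  have e1 : (t1 + t2) * a1 = t1 by rewrite /a1 mulrC divfK.
  have e2 : (t1 + t2) * a2 = t2 by rewrite /a2 mulrC divfK.
  clearbody a1 a2.
  exists (t1 + t2), (a1 *: u1 + a2 *: u2), (a1 *: w1 + a2 *: w2); split.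
  - exact: ltW.
  - apply: le_trans (ler_normD _ _) _.
    rewrite !normrZ !ger0_norm //.
    have := ler_wpM2l a10 hu1; have := ler_wpM2l a20 hu2.
    move: a12; generalize (d / 2) => D; nra.
  - exact: conv_hull2.
  - exact: vec_id1.
pose S x := [set `|x - y| | y in NE].
pose q x := inf (S x).
have Sne : forall x, S x !=set0 by move=> x; exists `|x - 0|; exists 0.
have Slb : forall x, has_lbound (S x).
  by move=> x; exists 0 => _ [y _ <-]; exact: normr_ge0.
have qle : forall x y, NE y -> q x <= `|x - y|.
  by move=> x y hy; apply: (ge_inf (Slb x)); exists y.
have qlb : forall x c, (forall y, NE y -> c <= `|x - y|) -> c <= q x.
  by move=> x c h; apply: lb_le_inf (Sne x) _ => _ [y hy <-]; exact: h.
have qge0 : forall x, 0 <= q x by move=> x; apply: (qlb) => y _; exact: normr_ge0.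
have qnorm : forall x, q x <= `|x| by move=> x; have := qle x 0 NE0; rewrite subr0.
have qhom : forall t x, 0 < t -> q (t *: x) = t * q x.
  move=> t x t0; apply/eqP; rewrite eq_le; apply/andP; split.
    rewrite -ler_pdivrMl //; apply: (qlb) => y hy.
    rewrite ler_pdivrMl //.
    have := qle (t *: x) (t *: y) (NEZ _ _ (ltW t0) hy).
    by rewrite -scalerBr normrZ gtr0_norm.
  apply: (qlb) => y hy.
  have ti0 : 0 < t^-1 by rewrite invr_gt0.
  have hy' := NEZ _ _ (ltW ti0) hy.
  have := qle x _ hy'.
  rewrite -(@ler_pM2l _ t t0) => h; apply: (le_trans h).
  have -> : t * `|x - t^-1 *: y| = `|t *: (x - t^-1 *: y)| by rewrite normrZ gtr0_norm.
  by rewrite scalerBr scalerA mulfV ?gt_eqF // scale1r.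
have qadd : forall x y, q (x + y) <= q x + q y.
  move=> x y; rewrite -lerBlDr; apply: (qlb) => y1 hy1.
  rewrite lerBlDl -lerBlDr; apply: (qlb) => y2 hy2.
  rewrite lerBlDr.
  have := qle (x + y) _ (NED _ _ hy1 hy2).
  have -> : x + y - (y1 + y2) = (x - y1) + (y - y2).
    by rewrite opprD addrACA.
  move=> h; apply: (le_trans h); rewrite (addrC `|y - y2|); exact: ler_normD.
have [f [fl fq fx0]] := hahn_banach qadd qhom qge0 (b0 - z).
have [f0 fD fN fZ] := lin_facts fl.
have fb : forall x, `|f x| <= `|x|.
  move=> x; rewrite ler_norml; apply/andP; split.
    have := fq (- x); have := qnorm (- x); rewrite fN normrN => h1 h2; lra.
  have := fq x; have := qnorm x => h1 h2; lra.
have hx0 : d / 2 <= q (b0 - z).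
  apply: (qlb) => _ [t [u [w [t0 hu hw ->]]]].
  have t1 : 0 < 1 + t by lra.
  pose c := (1 + t)^-1.
  have c0 : 0 <= c by rewrite /c invr_ge0 ltW.
  have hc : (1 + t) * c = 1 by rewrite /c mulfV ?gt_eqF.
  rewrite (vec_id2 _ _ _ _ hc).
  have hw' : conv_hull B (c *: b0 + (t * c) *: w).
    apply: conv_hull2; [exact: conv_hull1|exact: hw|exact: c0|exact: mulr_ge0|].
    rewrite -hc; ring.
  have := hd _ hw'; rewrite distrC => hd'.
  apply: le_trans (lerB_dist _ _).
  rewrite !normrZ !ger0_norm ?(ltW t1) //.
  have := ler_wpM2l t0 hu; have := ler_wpM2l (ltW t1) hd'.
  generalize (`|c *: b0 + (t * c) *: w - z|) (`|u|) => N U.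
  move: d0; generalize d => D; move=> h1 h2 h3; nra.
have nx0 : 0 < `|b0 - z| by apply: lt_le_trans d2 (le_trans hx0 (qnorm _)).
pose k := d / 2 / `|b0 - z|.
have k0 : 0 < k by rewrite /k divr_gt0.
exists f; split => //.
exists (k * q (b0 - z)).
  by apply: mulr_gt0 => //; exact: lt_le_trans d2 hx0.
move=> b Bb.
have hu : `|k *: (b0 - z)| <= d / 2.
  by rewrite normrZ gtr0_norm // /k divfK ?gt_eqF.
have hy : NE (1 *: (z + k *: (b0 - z) - b)) by exists 1, (k *: (b0 - z)), b; split => //; exact: conv_hull1.
have := le_trans (fq _) (qle (1 *: (z + k *: (b0 - z) - b)) _ hy); rewrite subrr normr0.
rewrite fZ mul1r fD fN fD fZ fx0; lra.
Qed.
End Sep.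
Lemma natinv (R : realType) (e : R) : 0 < e -> exists n : nat, (n.+1%:R)^-1 < e.
Proof.
move=> e0; have := near_infty_natSinv_lt (PosNum e0).
case=> N _ hN; exists N; apply: hN; exact: leqnn.
Qed.
Lemma bnd (R : realType) (X : normedModType R) (A : set X) : [bounded x | x in A] ->
  exists M : R, forall x, A x -> `|x| <= M.
Proof.
move=> Ab; have [M0 [_ hM]] := Ab; exists (M0 + 1) => x Ax.
by apply: (hM (M0 + 1)) => //; rewrite ltrDl.
Qed.
Section Help.
Variables (R : realType) (X : normedModType R).

Lemma lin_sum (f : X -> R) : (forall a x y, f (a *: x + y) = a * f x + f y) ->
  forall m (lam : 'I_m -> R) (xs : 'I_m -> X),
  f (\sum_(i < m) lam i *: xs i) = \sum_(i < m) lam i * f (xs i).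
Proof.
move=> fl m lam xs; have [f0 fD fN fZ] := lin_facts fl.
rewrite (big_morph f fD f0); apply: eq_bigr => i _; exact: fZ.
Qed.

Lemma dual0 : is_dual (fun _ : X => (0 : R)).
Proof. split; first by move=> *; rewrite mulr0 addr0. exact: cst_continuous. Qed.

Lemma slice_nonempty (A : set X) (f : X -> R) (e M : R) z : is_dual f -> 0 < e -> A z ->
  (forall x, A x -> `|x| <= M) -> exists x, slice A f e x.
Proof.
move=> fd e0 Az hM; have [K K0 hK] := bound_of_dual fd.
have hs : has_sup (f @` A).
  split; first by exists (f z); exists z.
  exists (K * M) => _ [x Ax <-]; apply: le_trans (ler_norm _) _.
  apply: le_trans (hK x) _; apply: ler_wpM2l; [exact: ltW | exact: hM].
have [_ [x Ax <-] hx] := sup_adherent e0 hs.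
by exists x; split.
Qed.
End Help.
Section Dat.
Variables (R : realType) (X : normedModType R).
Definition Dat := {m : nat & (('I_m -> R) * ('I_m -> X -> R) * ('I_m -> R))%type}.
Definition dlam (d : Dat) : 'I_(projT1 d) -> R := (projT2 d).1.1.
Definition dfs (d : Dat) : 'I_(projT1 d) -> X -> R := (projT2 d).1.2.
Definition des (d : Dat) : 'I_(projT1 d) -> R := (projT2 d).2.
End Dat.
Arguments dlam {R X} d _.
Arguments dfs {R X} d _ _.
Arguments des {R X} d _.
Definition slice_of {R : realType} {X : normedModType R} (d : @Dat R X) (i : nat) : (X -> R) * R :=
  match (insub i : option 'I_(projT1 d)) with
  | Some j => (dfs d j, des d j) | None => (fun _ => 0, 1) end.
Lemma slice_of_val {R : realType} {X : normedModType R} (d : @Dat R X) (j : 'I_(projT1 d)) : slice_of d (val j) = (dfs d j, des d j).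
Proof. by rewrite /slice_of valK. Qed.
Definition dat0 {R : realType} {X : normedModType R} : @Dat R X := existT _ 0%N ((fun _ => 0, fun _ _ => 0), fun _ => 0).

Theorem theorem2p19 (R : realType) (X : completeNormedModType R) (A : set X) :
  separable_set A -> closed A -> convex_set A -> [bounded x | x in A] ->
  small_combinations_of_slices A -> SCD_set A.
Proof.
move=> [D [DA Dc AD]] _ _ Abnd SC.
have [M hM] := bnd Abnd.
have /countable_injP [g ginj] := Dc.
pose a k := xget (0:X) [set d | D d /\ g d = k].
have aD : forall c, A c -> forall eta, 0 < eta -> exists k, `|c - a k| < eta.
  move=> c Ac eta eta0.
  have [d [Dd bd]] := AD c Ac (ball c eta) (nbhsx_ballx c eta eta0).
  exists (g d).
  have [Da ga] : D (a (g d)) /\ g (a (g d)) = g d.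
    exact: (xgetPex (0:X) (ex_intro (fun x => D x /\ g x = g d) d (conj Dd erefl))).
  have -> : a (g d) = d by apply: ginj => //; apply: mem_set.
  by move: bd; rewrite -ball_normE.
pose Good k n (dt : @Dat R X) := [/\ forall i, 0 < dlam dt i, \sum_i dlam dt i = 1,
   forall i, is_dual (dfs dt i) /\ 0 < des dt i &
   forall x, comb_slices A (dlam dt) (dfs dt) (des dt) x -> `|x - a k| <= (n.+1%:R)^-1].
have Hsel : forall kn : nat * nat, exists dt : @Dat R X,
    (forall i, is_dual (dfs dt i) /\ 0 < des dt i) /\
    ((exists dt', Good kn.1 kn.2 dt') -> Good kn.1 kn.2 dt).
  move=> [k n]; case: (pselect (exists dt, Good k n dt)) => [[dt gdt]|nex].
    by exists dt; split => //; case: gdt.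
  by exists dat0; split => // -[i hi].
have [sel hsel] := choice Hsel.
pose fsN N := match unpickle N with Some (kn, i) => (slice_of (sel kn) i).1
  | None => fun _ : X => (0 : R) end.
pose esN N := match unpickle N with Some (kn, i) => (slice_of (sel kn) i).2
  | None => (1 : R) end.
exists fsN, esN; split.
  move=> N; rewrite /fsN /esN; case: (unpickle N) => [[kn i]|]; last first.
    by split; [exact: dual0 | exact: ltr01].
  rewrite /slice_of; case: (insub i) => [j|] /=; last first.
    by split; [exact: dual0 | exact: ltr01].
  exact: (hsel kn).1.
move=> Bs BA Bmeet z Az.
apply: contrapT => nz.
have [d0 [d0p hd]] : exists d, 0 < d /\ forall w, conv_hull Bs w -> d <= `|z - w|.
  apply: contrapT => hne; apply: nz => N Nz.
  have [e e0 he] := (nbhs_ballP z N).1 Nz.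
  apply: contrapT => hempty; apply: hne; exists e; split => // w hw.
  rewrite leNgt; apply/negP => hlt; apply: hempty; exists w; split => //.
  by apply: he; rewrite -ball_normE.
have [b0 [Bb0 _]] := Bmeet 0%N.
have [f [fl fb [delta delta0 hdelta]]] := separation d0p Bb0 hd.
have [f0 fD fN fZ] := lin_facts fl.
pose gg x := - f x.
have gl : forall a0 x y, gg (a0 *: x + y) = a0 * gg x + gg y.
  by move=> a0 x y; rewrite /gg fl opprD mulrN.
have gb : forall x, `|gg x| <= `|x| by move=> x; rewrite /gg normrN.
have gd : is_dual gg := conj gl (cont_of_bound gl gb).
have gsub : forall x y, gg x - gg y <= `|x - y|.
  move=> x y; have -> : gg x - gg y = gg (x - y) by rewrite /gg fD fN opprD opprK.
  exact: le_trans (ler_norm _) (gb _).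
have hG : has_ubound (gg @` A).
  exists M => _ [x Ax <-]; exact: le_trans (ler_norm _) (le_trans (gb x) (hM x Ax)).
have gz : gg z <= sup (gg @` A) by apply: (ub_le_sup hG); exists z.
have d4 : 0 < delta / 4 by rewrite divr_gt0.
have [n hn] := natinv d4.
pose inv := (n.+1%:R)^-1 : R.
have inv0 : 0 < inv by rewrite /inv invr_gt0.
have eta0 : 0 < inv / 2 by rewrite divr_gt0.
have d2 : 0 < delta / 2 by rewrite divr_gt0.
have [C0 [CC0 C0sl dC0]] := SC gg (delta / 2) gd d2 (inv / 2) eta0.
case: CC0 => m [lam [fs [es [lam0 lams fsd eC0]]]].
subst C0.
have Hxs : forall i, exists x, slice A (fs i) (es i) x.
  move=> i; exact: slice_nonempty (fsd i).1 (fsd i).2 Az hM.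
have [xs hxs] := choice Hxs.
pose c := \sum_(i < m) lam i *: xs i.
have Cc : comb_slices A lam fs es c by exists xs.
have [Ac gc] := C0sl c Cc.
have [k hk] := aD c Ac (inv / 2) eta0.
have diamb : forall x, comb_slices A lam fs es x -> `|x - c| <= diam (comb_slices A lam fs es).
  move=> x Cx; apply: ub_le_sup.
    exists (M + M) => _ [x1 C1 [y1 C2 <-]].
    apply: le_trans (ler_normB _ _) _.
    by apply: lerD; [exact: hM (C0sl _ C1).1 | exact: hM (C0sl _ C2).1].
  by exists x => //; exists c.
have good : Good k n (existT _ m ((lam, fs), es)).
  split => // x Cx.
  have h1 := diamb x Cx.
  apply: ltW; apply: le_lt_trans (ler_distD c x (a k)) _.
  move: h1 hk dC0 => h1 h2 h3; rewrite -/inv; clearbody inv; lra.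
have [_ gsel] := hsel (k, n).
have := gsel (ex_intro _ _ good).
set dt := sel (k, n).
case=> lam1 sum1 dual1 close1.
have Hbs : forall i : 'I_(projT1 dt), exists b, Bs b /\ slice A (dfs dt i) (des dt i) b.
  move=> i; have := Bmeet (pickle ((k, n), val i)).
  rewrite /fsN /esN pickleK /= slice_of_val /=.
  by case=> b [Bb sb]; exists b.
have [bs hbs] := choice Hbs.
pose y := \sum_(i < projT1 dt) dlam dt i *: bs i.
have Cy : comb_slices A (dlam dt) (dfs dt) (des dt) y.
  by exists bs; split => // i; exact: (hbs i).2.
have cy := close1 y Cy.
have gyup : gg y <= gg z - delta.
  rewrite /y (lin_sum gl).
  apply: (@le_trans _ _ (\sum_(i < projT1 dt) dlam dt i * (gg z - delta))).
    apply: ler_sum => i _; apply: ler_wpM2l; first exact: ltW.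
    by rewrite /gg; have := hdelta _ (hbs i).1; lra.
  by rewrite -mulr_suml sum1 mul1r.
have hcy := gsub c y.
have tri := ler_distD (a k) c y.
move: hcy tri cy hk gc gz gyup hn dC0; rewrite (distrC (a k) y) -/inv.
clearbody inv; move=> *; lra.
Qed.
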